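(* Let $f$ be a positive function on $\mathbb R$ such that there exist $M>0$ and $q_1\in(0,1]$ with $f(x)\le M\psi(q_1x)$ for all $x\in\mathbb R$. Then for all $q_2\in(0,1)$ and all $\sigma\in(0,1-q_2^2)$, $$K_\sigma f(x)\le\frac{2}{\sqrt3}M\psi(q_1q_2x)\quad\text{for all }x\in\mathbb R.$$
   Context: $\psi(x)=\pi^{-1/2}e^{-x^2}$, $\psi_\sigma(x)=\sigma^{-1}\psi(x/\sigma)$, $K_\sigma f=f*\psi_\sigma$. *)

(* Defs.v *)
From HB Require Import structures.
From mathcomp Require Import all_boot all_order all_algebra.
From mathcomp Require Import all_classical all_reals all_analysis.
Set Implicit Arguments. Unset Strict Implicit. Unset Printing Implicit Defensive.
Import Order.TTheory GRing.Theory Num.Theory.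
Local Open Scope ring_scope.
Local Open Scope classical_set_scope.

Definition psi {R : realType} (x : R) : R := (Num.sqrt pi)^-1 * expR (- (x ^+ 2)).

Definition psi_s {R : realType} (sigma x : R) : R := sigma^-1 * psi (x / sigma).

Definition Kconv {R : realType} (sigma : R) (f : R -> R) (x : R) : \bar R :=
  (\int[@lebesgue_measure R]_(y in [set: R]) (f y * psi_s sigma (x - y))%:E)%E.

(* Main.v *)
Set Warnings "-notation-overridden,-ambiguous-paths,-notation-incompatible-prefix".
Require Import Defs.
From HB Require Import structures.
From mathcomp Require Import all_boot all_order all_algebra.
From mathcomp Require Import all_classical all_reals all_analysis.
From mathcomp Require Import measurable_realfun normal_distribution.
From mathcomp Require Import ring lra.
Import Order.TTheory GRing.Theory Num.Theory.
Import numFieldNormedType.Exports.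
Local Open Scope ring_scope.
Local Open Scope classical_set_scope.

Section S.
Context {R : realType}.
Notation mu := (@lebesgue_measure R).

Lemma meas_g (a c : R) : measurable_fun [set: R] (fun y => expR (- (a * (y - c)) ^+ 2)).
Proof.
apply: measurableT_comp => //; apply: measurableT_comp => //.
apply: measurable_funX => //=; apply: measurable_funM => //; exact: measurable_funB.
Qed.

Lemma gauss_scaled (a c : R) : 0 < a ->
  (\int[mu]_y (expR (- (a * (y - c)) ^+ 2))%:E = (Num.sqrt pi / a)%:E)%E.
Proof.
move=> a0.
set s := (a * Num.sqrt 2)^-1.
have s0 : s != 0 by rewrite invr_eq0 mulf_neq0 ?gt_eqF ?sqrtr_gt0.
have ss : s ^+ 2 *+ 2 = a^-2.
  rewrite /s exprVn exprMn sqr_sqrtr // -mulr_natr.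
  rewrite invfM -mulrA [X in _ * X]mulrC divff ?mulr1 //.
have Pe : normal_peak s = a / Num.sqrt pi.
  rewrite /normal_peak -mulrnAl ss.
  have -> : a^-2 * pi = (Num.sqrt pi / a) ^+ 2.
    by rewrite exprMn sqr_sqrtr ?pi_ge0 // exprVn mulrC.
  rewrite sqrtr_sqr ger0_norm ?divr_ge0 ?sqrtr_ge0 ?ltW //.
  by rewrite invf_div.
have := integral_normal_pdf c s.
rewrite normal_pdfE //.
under eq_integral do rewrite EFinM.
rewrite ge0_integralZl //; last 3 first.
- by apply/measurable_EFinP; exact: measurable_normal_fun.
- by move=> y _; rewrite lee_fin normal_fun_ge0.
- by rewrite lee_fin normal_peak_ge0.
have -> : (\int[mu]_x (normal_fun c s x)%:E = \int[mu]_y (expR (- (a * (y - c)) ^+ 2))%:E)%E.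
  apply: eq_integral => y _; congr (_%:E); rewrite /normal_fun ss.
  by rewrite exprMn mulNr mulrC invrK.
rewrite Pe.
have : (0 <= \int[mu]_y (expR (- (a * (y - c)) ^+ 2))%:E)%E.
  by apply: integral_ge0 => y _; rewrite lee_fin expR_ge0.
case: (\int[mu]_y _)%E => [r| |] //= r0.
- move=> /eqP; rewrite -EFinM eqe => /eqP h.
  congr (_%:E); apply: (mulfI (x := a / Num.sqrt pi)).
    by rewrite mulf_neq0 ?invr_eq0 ?gt_eqF ?sqrtr_gt0 ?pi_gt0.
  have sp : Num.sqrt pi != 0 :> R by rewrite gt_eqF // sqrtr_gt0 pi_gt0.
  rewrite h; field; by rewrite sp gt_eqF.
- rewrite gt0_muley ?lte_fin ?divr_gt0 ?sqrtr_gt0 ?pi_gt0 //.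
Qed.

Lemma meas_ps (sigma x : R) : measurable_fun [set: R] (fun y => psi_s sigma (x - y)).
Proof.
rewrite /psi_s /psi; apply: measurable_funM => //; apply: measurable_funM => //.
apply: measurableT_comp => //; apply: measurableT_comp => //.
apply: measurable_funX; apply: measurable_funM => //; exact: measurable_funB.
Qed.

Lemma psi_ge0 (y : R) : 0 <= psi y.
Proof. by rewrite /psi mulr_ge0 ?invr_ge0 ?sqrtr_ge0 ?expR_ge0. Qed.

End S.

Theorem lemma15 (R : realType) (f : R -> R) (M q1 : R) :
  measurable_fun [set: R] f ->
  (forall x, 0 < f x) ->
  0 < M -> 0 < q1 -> q1 <= 1 ->
  (forall x, f x <= M * psi (q1 * x)) ->
  forall q2 sigma : R, 0 < q2 -> q2 < 1 -> 0 < sigma -> sigma < 1 - q2 ^+ 2 ->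
  forall x : R,
    (Kconv sigma f x <= (2 / Num.sqrt 3 * M * psi (q1 * q2 * x))%:E)%E.
Proof.
move=> mf fpos M0 q10 q11 fle q2 sigma q20 q21 s0 s1 x.
set A := q1 ^+ 2 + sigma^-1 ^+ 2.
have A0 : 0 < A by rewrite /A addr_gt0 // exprn_gt0 // invr_gt0.
set a := Num.sqrt A.
have a0 : 0 < a by rewrite sqrtr_gt0.
have aa : a ^+ 2 = A by rewrite sqr_sqrtr // ltW.
set D := 1 + q1 ^+ 2 * sigma ^+ 2.
have D0 : 0 < D by rewrite /D ltr_pwDl // mulr_ge0 // sqr_ge0.
set c := x / D.
set B := q1 ^+ 2 / D.
have r0 : 0 < Num.sqrt pi :> R by rewrite sqrtr_gt0 pi_gt0.
have Pi : pi = Num.sqrt pi * Num.sqrt pi :> R by rewrite -expr2 sqr_sqrtr // pi_ge0.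
set C := M / (pi * sigma) * expR (- (B * x ^+ 2)).
have key y : M * psi (q1 * y) * psi_s sigma (x - y) = C * expR (- (a * (y - c)) ^+ 2).
  have E : - (q1 * y) ^+ 2 + - ((x - y) / sigma) ^+ 2 = - (B * x ^+ 2) + - (a * (y - c)) ^+ 2.
    rewrite !exprMn; rewrite aa /A /B /c /D; field.
    by rewrite exprMn -/D !gt_eqF.
  rewrite /psi_s /psi.
  transitivity (M * (Num.sqrt pi)^-1 * sigma^-1 * (Num.sqrt pi)^-1 *
     expR (- (q1 * y) ^+ 2 + - ((x - y) / sigma) ^+ 2)).
    rewrite expRD; ring.
  rewrite E expRD /C; move: (Num.sqrt pi) r0 Pi => r r0' ->; field.
  by rewrite !gt_eqF.
have ps0 y : 0 <= psi_s sigma (x - y).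
  by rewrite /psi_s mulr_ge0 ?psi_ge0 // invr_ge0 ltW.
apply: (@le_trans _ _ (\int[lebesgue_measure]_y (C * expR (- (a * (y - c)) ^+ 2))%:E)%E).
  apply: ge0_le_integral => //.
  - by move=> y _; rewrite lee_fin mulr_ge0 // ltW.
  - by apply/measurable_EFinP; apply: measurable_funM => //; exact: meas_ps.
  - apply/measurable_EFinP; apply: measurable_funM => //; exact: meas_g.
  - by move=> y _; rewrite lee_fin -key ler_wpM2r.
have C0 : 0 <= C by rewrite /C mulr_ge0 ?expR_ge0 // divr_ge0 ?ltW // mulr_gt0 // pi_gt0.
under eq_integral do rewrite EFinM.
rewrite ge0_integralZl_EFin //; last first.
  by apply/measurable_EFinP; exact: meas_g.
rewrite gauss_scaled // -EFinM lee_fin.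
have hsa : 1 <= sigma * a.
  have : sigma^-1 <= a.
    have si0 : 0 <= sigma^-1 by rewrite invr_ge0 ltW.
    rewrite -[X in X <= _](ger0_norm si0).
    rewrite -sqrtr_sqr /a ler_sqrt ?(ltW A0) //.
    by rewrite /A lerDr sqr_ge0.
  by move=> h; have := ler_wpM2l (ltW s0) h; rewrite divff ?gt_eqF.
have s1' : sigma < 1.
  by apply: (lt_le_trans s1); rewrite lerBlDr lerDl sqr_ge0.
have hq : q2 ^+ 2 * D <= 1.
  have w1 : q1 ^+ 2 <= 1 by rewrite expr2; apply: mulr_ile1 => //; exact: ltW.
  have w2 : q1 ^+ 2 * sigma ^+ 2 <= sigma.
    have : sigma ^+ 2 <= sigma by rewrite expr2; apply: ler_piMr; apply: ltW.
    have : 0 <= sigma ^+ 2 by rewrite sqr_ge0.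
    nra.
  have u0 : 0 <= q2 ^+ 2 by rewrite sqr_ge0.
  rewrite /D.
  nra.
have hE : expR (- (B * x ^+ 2)) <= expR (- (q1 * q2 * x) ^+ 2).
  rewrite ler_expR lerN2.
  have -> : B * x ^+ 2 = (q1 * q2 * x) ^+ 2 + (q1 * x) ^+ 2 * (1 - q2 ^+ 2 * D) / D.
    rewrite /B; field; by rewrite gt_eqF.
  rewrite lerDl; apply: divr_ge0; last exact: ltW.
  by apply: mulr_ge0; [exact: sqr_ge0 | rewrite subr_ge0].
have h3 : 1 <= 2 / Num.sqrt 3 :> R.
  have s30 : 0 < Num.sqrt 3 :> R by rewrite sqrtr_gt0.
  rewrite ler_pdivlMr // mul1r.
  rewrite -[X in _ <= X](@ger0_norm _ 2) // -sqrtr_sqr ler_sqrt ?exprn_ge0 //.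
  by rewrite expr2 -natrM ler_nat.
have sa0 : 0 < sigma * a by rewrite mulr_gt0.
have -> : C * (Num.sqrt pi / a) =
   (M * expR (- (B * x ^+ 2)) / Num.sqrt pi) * (sigma * a)^-1.
  rewrite /C; move: (Num.sqrt pi) r0 Pi => r r0' ->; field.
  by rewrite !gt_eqF.
rewrite /psi.
apply: (le_trans (ler_piMr _ _)).
  by apply: mulr_ge0; [apply: mulr_ge0; [exact: ltW | exact: expR_ge0] | rewrite invr_ge0; exact: ltW].
  by rewrite invf_le1.
rewrite -(mulrA (2 / _)).
apply: (@le_trans _ _ (M * ((Num.sqrt pi)^-1 * expR (- (q1 * q2 * x) ^+ 2)))).
  rewrite -mulrA [expR _ * _]mulrC.
  apply: ler_wpM2l; first exact: ltW.
  apply: ler_wpM2l => //; rewrite invr_ge0; exact: ltW.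
apply: ler_peMl h3.
apply: mulr_ge0; first exact: ltW.
apply: mulr_ge0; last exact: expR_ge0.
rewrite invr_ge0; exact: ltW.
Qed.
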